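(* Let $G$ be a graph, $D\ge1$, and $e_1,\dots,e_r$ edges of $G$ with masses $m_{e_1},\dots,m_{e_r}$ all nonzero. If for some choice of constants $c_{e_1},\dots,c_{e_r}\in\mathbb C^D$ the intersection of quadrics $Q_{e_1}\cap\cdots\cap Q_{e_r}\subset H_1(G,\mathbb C^D)$ has a pinch point (a point of the intersection at which the differentials of the $r$ defining functions are linearly dependent), then the graph obtained from $G$ by cutting (deleting) the edges $e_1,\dots,e_r$ is disconnected.
   Context: Fix a nondegenerate symmetric bilinear form on $\mathbb C^D$ (the complexified Minkowski form), writing $v^2$ for the square of $v\in\mathbb C^D$. For an edge $e$, $e^\vee:H_1(G,\mathbb C^D)\to\mathbb C^D$ is the composite of the inclusion $H_1(G,\mathbb C^D)\subset(\mathbb C^D)^E$ with the $e$-th projection. For $c_e\in\mathbb C^D$ and a mass $m_e\in\mathbb C$, the propagator quadric is $Q_e=\{x\in H_1(G,\mathbb C^D)\mid (e^\vee(x)-c_e)^2-m_e^2=0\}$. *)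

(* Defs.v *)
From HB Require Import structures.
From mathcomp Require Import all_boot all_order all_algebra.
From mathcomp Require Import reals.
From mathcomp Require Import complex.
Set Implicit Arguments. Unset Strict Implicit. Unset Printing Implicit Defensive.
Import Order.TTheory GRing.Theory Num.Theory.
Local Open Scope ring_scope.

Section Defs.
Variable R : realType.
Local Notation C := R[i].

Definition bform (D : nat) (B : 'M[C]_D) (u v : 'rV[C]_D) : C :=
  (u *m B *m v^T) 0 0.

Definition nondeg_sym (D : nat) (B : 'M[C]_D) : Prop :=
  B^T = B /\ B \in unitmx.

(* A finite multigraph: vertices V, edges E, each edge oriented src -> tgt
   (loops and multiple edges allowed).  An element of (C^D)^E is a
   function x : E -> 'rV_D, and e^vee(x) = x e. *)

(* H_1(G, C^D) = kernel of the boundary map (C^D)^E -> (C^D)^V. *)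
Definition in_H1 (V E : finType) (src tgt : E -> V) (D : nat)
    (x : E -> 'rV[C]_D) : Prop :=
  forall w : V, \sum_(e | tgt e == w) x e - \sum_(e | src e == w) x e = 0.

Definition quad_fun (D : nat) (B : 'M[C]_D) (E : finType) (e : E)
    (c : 'rV[C]_D) (m : C) (x : E -> 'rV[C]_D) : C :=
  bform B (x e - c) (x e - c) - m ^+ 2.

Definition dquad_fun (D : nat) (B : 'M[C]_D) (E : finType) (e : E)
    (c : 'rV[C]_D) (x v : E -> 'rV[C]_D) : C :=
  bform B (x e - c) (v e) + bform B (v e) (x e - c).

Definition pinch_point (V E : finType) (src tgt : E -> V) (D r : nat)
    (B : 'M[C]_D) (edges : 'I_r -> E) (c : 'I_r -> 'rV[C]_D) (m : 'I_r -> C)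
    (x : E -> 'rV[C]_D) : Prop :=
  [/\ in_H1 src tgt x,
      forall i, quad_fun B (edges i) (c i) (m i) x = 0 &
      exists lambda : 'I_r -> C, (exists i, lambda i != 0) /\
        forall v, in_H1 src tgt v ->
          \sum_(i < r) lambda i * dquad_fun B (edges i) (c i) x v = 0].

End Defs.

Definition cut_adj (V E : finType) (src tgt : E -> V) (S : {set E}) : rel V :=
  fun u w => [exists e, (e \notin S) &&
    (((src e == u) && (tgt e == w)) || ((src e == w) && (tgt e == u)))].

Definition cut_connected (V E : finType) (src tgt : E -> V) (S : {set E})
    : Prop :=
  forall u w : V, connect (cut_adj src tgt S) u w.

(* Main.v *)
Require Import Defs.
From HB Require Import structures.
From mathcomp Require Import all_boot all_order all_algebra.
From mathcomp Require Import reals.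
From mathcomp Require Import complex.
Import Order.TTheory GRing.Theory Num.Theory.
Local Open Scope ring_scope.

Section Aux.
Variables (K : zmodType) (E : finType).

Lemma sum_ind (P : pred E) (e : E) (y : K) :
  \sum_(e' | P e') (if e' == e then y else 0) = if P e then y else 0.
Proof.
rewrite -big_mkcondr /=; case: ifP => Pe.
  rewrite (big_pred1 e) // => e' /=; case: eqP => [->|]; rewrite ?Pe ?andbF //.
rewrite big_pred0 // => e'; case: eqP => [->|]; rewrite ?Pe ?andbF //.
Qed.
End Aux.

Section Main.
Variables (K : zmodType) (V E : finType) (src tgt : E -> V) (S : {set E}).

Definition defect (x : E -> K) (n : V) : K :=
  \sum_(e | tgt e == n) x e - \sum_(e | src e == n) x e.

Lemma defect_add x z n :
  defect (fun e => x e + z e) n = defect x n + defect z n.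
Proof. by rewrite /defect !big_split /=; rewrite opprD addrACA. Qed.

Lemma defect_ind e y n :
  defect (fun e' => if e' == e then y else 0) n =
  (if tgt e == n then y else 0) - (if src e == n then y else 0).
Proof. by rewrite /defect !(@sum_ind K E (fun e' => _ == n)). Qed.

Lemma defect_opp x n : defect (fun e => - x e) n = - defect x n.
Proof. by rewrite /defect !sumrN opprK opprB addrC. Qed.

Lemma flow_exists a b (y : K) : connect (cut_adj src tgt S) a b ->
  exists x : E -> K, (forall e, e \in S -> x e = 0) /\
    forall n, defect x n = (if b == n then y else 0) - (if a == n then y else 0).
Proof.
move=> /connectP [p Hp ->]; elim: p a Hp => [|b' p IH] a /=.
  by move=> _; exists (fun _ => 0); split => // n; by rewrite /defect !big1 // !subrr.
case/andP => /existsP [e /andP [eS Hor]] Hp.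
have [x [xS xd]] := IH _ Hp.
case/orP: Hor => /andP [/eqP Hs /eqP Ht].
  exists (fun e' => x e' + (if e' == e then y else 0)); split.
    by move=> e' He'; rewrite xS // ; case: eqP => [E'|]; [by move: eS; rewrite -E' He'|rewrite addr0].
  move=> n; rewrite defect_add xd defect_ind Hs Ht.
  by rewrite addrA subrK.
exists (fun e' => x e' + - (if e' == e then y else 0)); split.
  by move=> e' He'; rewrite xS // ; case: eqP => [E'|]; [by move: eS; rewrite -E' He'|rewrite oppr0 addr0].
move=> n; rewrite defect_add (defect_opp (fun e' => if e' == e then y else 0)).
by rewrite xd defect_ind Hs Ht opprB addrA subrK.
Qed.
End Main.
Arguments defect {K V E} src tgt x n.
Arguments flow_exists {K V E} src tgt S a b y.
Arguments defect_add {K V E} src tgt x z n.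
Arguments defect_ind {K V E} src tgt e y n.
Arguments defect_opp {K V E} src tgt x n.

Theorem proposition10p1 (R : realType) (V E : finType) (src tgt : E -> V)
    (D r : nat) (B : 'M[R[i]]_D) (edges : 'I_r -> E)
    (m : 'I_r -> R[i]) (c : 'I_r -> 'rV[R[i]]_D) :
  (1 <= D)%N -> nondeg_sym B -> injective edges ->
  (forall i, m i != 0) ->
  (exists x : E -> 'rV[R[i]]_D, pinch_point src tgt B edges c m x) ->
  ~ cut_connected src tgt [set edges i | i : 'I_r].
Proof.
move=> _ _ inj mnz [x [xH xQ [lam [[i li] Hl]]]] conn.
set S := [set edges i | i : 'I_r].
set y := x (edges i) - c i.
have [z [zS zd]] := flow_exists src tgt S _ _ y (conn (tgt (edges i)) (src (edges i))).
pose v := fun e => z e + (if e == edges i then y else 0).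
have vH : in_H1 src tgt v.
  move=> n; have := defect_add src tgt z (fun e => if e == edges i then y else 0) n.
  rewrite /defect => ->; rewrite -/(defect _ _ _ _) zd -/(defect _ _ _ _) defect_ind.
  by rewrite addrC addrA subrK subrr.
have := Hl v vH.
rewrite (bigD1 i) //= big1 ?addr0; last first.
  move=> j ji; rewrite /dquad_fun /v zS ?imset_f //.
  rewrite (inj_eq inj) (negbTE ji) addr0 /bform trmx0 mulmx0 !mul0mx.
  by rewrite mxE addr0 mulr0.
rewrite /dquad_fun /v zS ?imset_f // eqxx add0r -/y.
have := xQ i; rewrite /quad_fun -/y => /eqP; rewrite subr_eq0 => /eqP ->.
move/eqP; rewrite mulf_eq0 (negbTE li) /= -mulr2n mulrn_eq0 /= expf_eq0 /=.
by rewrite (negbTE (mnz i)).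
Qed.
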